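(* Let $G$ be a simple signed digraph without vertices of in-degree $0$ or $2$. Then at least one Boolean network on $G$ is not synchronizing.
   Context: A signed digraph on $V$ is $(V,E)$ with $E\subseteq V\times V\times\{-1,1\}$ (arc from $j$ to $i$ of sign $s$; loops allowed); it is simple if it never has both a positive and a negative arc from one vertex to another. In-degree counts in-neighbors. A Boolean network (BN) is $f:\{0,1\}^V\to\{0,1\}^V$; its signed interaction digraph has a positive (negative) arc from $j$ to $i$ iff for some $x$ with $x_j=0$, $f_i(x+e_j)-f_i(x)$ is positive (negative). A BN on $G$ is one whose signed interaction digraph is $G$. $f^i(x)$ is $x$ with $x_i$ replaced by $f_i(x)$; $f^{i_1\cdots i_\ell}=f^{i_\ell}\circ\cdots\circ f^{i_1}$; $f$ is synchronizing if $f^w$ is a constant map for some word $w$ over $V$. *)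

(* Defs.v *)
From mathcomp Require Import all_boot.
Set Implicit Arguments. Unset Strict Implicit. Unset Printing Implicit Defensive.

(* A sign in {-1,1} is encoded as a bool:
   true = +1 (positive), false = -1 (negative).
   A signed digraph is its arc set E : {set V * V * bool}; the triple
   (j, i, s) is an arc from j to i of sign s (loops allowed). *)
Definition sdigraph (V : finType) := {set V * V * bool}.

Definition simple_sd (V : finType) (E : sdigraph V) : Prop :=
  forall j i : V, ~ ((j, i, true) \in E /\ (j, i, false) \in E).

Definition indeg (V : finType) (E : sdigraph V) (i : V) : nat :=
  #|[set j : V | [exists s : bool, (j, i, s) \in E]]|.

Definition config (V : finType) := {ffun V -> bool}.
Definition BN (V : finType) := config V -> config V.

Definition setc (V : finType) (x : config V) (j : V) (b : bool) : config V :=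
  [ffun k => if k == j then b else x k].

Definition interaction_arc (V : finType) (f : BN V) (j i : V) (s : bool) : Prop :=
  exists x : config V, x j = false /\
    if s then f x i = false /\ f (setc x j true) i = true
    else f x i = true /\ f (setc x j true) i = false.

Definition BN_on (V : finType) (E : sdigraph V) (f : BN V) : Prop :=
  forall (j i : V) (s : bool), (j, i, s) \in E <-> interaction_arc f j i s.

Definition upd (V : finType) (f : BN V) (i : V) (x : config V) : config V :=
  setc x i (f x i).

Definition upd_word (V : finType) (f : BN V) (w : seq V) (x : config V) : config V :=
  foldl (fun y i => upd f i y) x w.

Definition synchronizing (V : finType) (f : BN V) : Prop :=
  exists (w : seq V) (c : config V), forall x : config V, upd_word f w x = c.

(* Main.v *)
Require Import Defs.
From mathcomp Require Import all_boot.
From mathcomp Require Import zify.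
Set Implicit Arguments. Unset Strict Implicit. Unset Printing Implicit Defensive.

Definition nbs (V : finType) (E : sdigraph V) (i : V) : {set V} :=
  [set j | [exists s : bool, (j, i, s) \in E]].
Definition sg (V : finType) (E : sdigraph V) (i j : V) : bool := (j, i, true) \in E.
Definition lit (V : finType) (E : sdigraph V) (i : V) (x : config V) (j : V) : bool :=
  if sg E i j then x j else ~~ x j.
Definition G (V : finType) (E : sdigraph V) (i : V) (l : V -> bool) : bool :=
  if [pick j in nbs E i] is Some j0 then
    if #|nbs E i| == 1 then l j0 else
    if l j0 then [exists j, [&& j \in nbs E i, j != j0 & l j]]
    else [forall j, (j \in nbs E i) ==> (j != j0) ==> l j]
  else false.
Definition Fn (V : finType) (E : sdigraph V) : BN V :=
  fun x => [ffun i => G E i (lit E i x)].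
Definition mk (V : finType) (E : sdigraph V) (i : V) (l : V -> bool) : config V :=
  [ffun k => if sg E i k then l k else ~~ l k].
Definition negc (V : finType) (x : config V) : config V := [ffun k => ~~ x k].

Lemma G_congr (V : finType) (E : sdigraph V) i (l l' : V -> bool) :
  (forall k, k \in nbs E i -> l k = l' k) -> G E i l = G E i l'.
Proof.
move=> H; rewrite /G; case: pickP => [j0 Hj0|] //.
rewrite (H j0 Hj0); case: ifP => _ //; case: (l' j0).
  apply: eq_existsb => j; case Hj: (j \in nbs E i) => //=; by rewrite H.
apply: eq_forallb => j; case Hj: (j \in nbs E i) => //=; by rewrite H.
Qed.

Lemma others (V : finType) (A : {set V}) j0 :
  j0 \in A -> #|A| != 1 -> exists j1, (j1 \in A) && (j1 != j0).
Proof.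
move=> Hj0 H1.
have: 0 < #|A :\ j0|.
  move: H1; rewrite (cardsD1 j0 A) Hj0; lia.
move/card_gt0P => [j1]; rewrite !inE => /andP[a b]; exists j1; by rewrite a b.
Qed.

Lemma G_mono (V : finType) (E : sdigraph V) i (l l' : V -> bool) :
  (forall k, k \in nbs E i -> l k -> l' k) -> G E i l -> G E i l'.
Proof.
move=> H; rewrite /G; case: pickP => [j0 Hj0|] //.
case: ifP => H1; first exact: H.
case E0: (l j0); case E0': (l' j0).
- move/existsP=> [j /and3P[a b c]]; apply/existsP; exists j; rewrite a b /=; exact: H.
- by have := H j0 Hj0 E0; rewrite E0'.
- move=> Hf; have [j1 /andP[a b]] := others Hj0 (negbT H1).
  apply/existsP; exists j1; rewrite a b /=; apply: (H _ a).
  by move/forallP: Hf => /(_ j1); rewrite a b.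
- move/forallP=> Hf; apply/forallP => j; apply/implyP => a; apply/implyP => b.
  apply: (H _ a); by move: (Hf j); rewrite a b.
Qed.

Lemma G_neg (V : finType) (E : sdigraph V) i (l : V -> bool) :
  0 < #|nbs E i| -> G E i (fun k => ~~ l k) = ~~ G E i l.
Proof.
move=> Hn; rewrite /G; case: pickP => [j0 Hj0|H0]; last first.
  by move/card_gt0P: Hn => [x]; rewrite (H0 x).
case: ifP => _ //; case: (l j0) => /=.
- rewrite negb_exists; apply: eq_forallb => j.
  by case: (j \in nbs E i); case: (j != j0); case: (l j).
- rewrite negb_forall; apply: eq_existsb => j.
  by case: (j \in nbs E i); case: (j != j0); case: (l j).
Qed.

Lemma G_ess (V : finType) (E : sdigraph V) i j :
  j \in nbs E i -> #|nbs E i| != 2 ->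
  exists l : V -> bool, forall v, G E i (fun k => if k == j then v else l k) = v.
Proof.
move=> Hj H2; rewrite /G; case: pickP => [j0 Hj0|H0]; last by rewrite H0 in Hj.
case H1: (#|nbs E i| == 1).
  move/cards1P: H1 => [x Hx]; move: Hj Hj0; rewrite Hx !inE => /eqP-> /eqP->.
  by exists (fun _ => false) => v; rewrite eqxx.
case: (eqVneq j j0) => [->|Hne].
- have [j1 /andP[a1 b1]] := others Hj0 (negbT H1).
  have: 0 < #|nbs E i :\ j0 :\ j1|.
    move: H1 H2; rewrite (cardsD1 j0 (nbs E i)) Hj0 (cardsD1 j1 (nbs E i :\ j0)) in_setD1 a1 b1.
    lia.
  move/card_gt0P => [j2]; rewrite !in_setD1 => /and3P[c2 b2 a2].
  exists (fun k => k == j1) => v; case: v.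
    apply/existsP; exists j1; by rewrite a1 b1 (negbTE b1) eqxx.
  apply/negP => /forallP /(_ j2). by rewrite a2 b2 (negbTE b2) (negbTE c2).
- exists (fun k => k == j0) => v; rewrite /= eqxx; case: v.
    apply/existsP; exists j; by rewrite Hj Hne eqxx.
  apply/negbTE/negP => /existsP [k /and3P[a b]].
  by case: ifP => // _ /eqP Hk; rewrite Hk eqxx in b.
Qed.

Lemma lit_mk (V : finType) (E : sdigraph V) i l k : lit E i (mk E i l) k = l k.
Proof. by rewrite /lit /mk ffunE; case: (sg E i k) => //; rewrite negbK. Qed.

Lemma upd_neg (V : finType) (E : sdigraph V) i x :
  (forall i, 0 < #|nbs E i|) ->
  upd (Fn E) i (negc x) = negc (upd (Fn E) i x).
Proof.
move=> Hn; apply/ffunP => k; rewrite /upd /setc /negc /Fn !ffunE.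
case: (k == i) => //; rewrite -G_neg //; apply: G_congr => m _.
by rewrite /lit ffunE; case: (sg E i m).
Qed.

Lemma upd_word_neg (V : finType) (E : sdigraph V) w x :
  (forall i, 0 < #|nbs E i|) ->
  upd_word (Fn E) w (negc x) = negc (upd_word (Fn E) w x).
Proof.
move=> Hn; elim: w x => [|a w IH] x //=.
rewrite /upd_word /= -/(upd_word _ _ _) upd_neg //; exact: IH.
Qed.

Theorem proposition1 (V : finType) (E : sdigraph V) :
  0 < #|V| ->
  simple_sd E ->
  (forall i : V, indeg E i <> 0 /\ indeg E i <> 2) ->
  exists f : BN V, BN_on E f /\ ~ synchronizing f.
Proof.
move=> HV Hsimp Hdeg.
have Hn : forall i, 0 < #|nbs E i|.
  move=> i; have [h _] := Hdeg i; rewrite /indeg in h; rewrite /nbs; lia.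
have H2 : forall i, #|nbs E i| != 2.
  move=> i; have [_ h] := Hdeg i; rewrite /indeg in h; rewrite /nbs; apply/eqP; exact h.
exists (Fn E); split.
- move=> j i s; split.
  + move=> H.
    have Hj : j \in nbs E i by rewrite inE; apply/existsP; exists s.
    have Hs : sg E i j = s.
      rewrite /sg; move: H; case: s => // H; apply/negP => Ht; exact: (Hsimp j i (conj Ht H)).
    have [l Hl] := G_ess Hj (H2 i).
    exists (mk E i (fun k => if k == j then ~~ s else l k)).
    have e1 : Fn E (mk E i (fun k => if k == j then ~~ s else l k)) i = ~~ s.
      rewrite /Fn ffunE -{2}(Hl (~~ s)); apply: G_congr => k _; exact: lit_mk.
    have e2 : Fn E (setc (mk E i (fun k => if k == j then ~~ s else l k)) j true) i = s.
      rewrite /Fn ffunE -{2}(Hl s); apply: G_congr => k _.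
      rewrite /lit /setc /mk !ffunE; case: (k =P j) => [->|_].
        by rewrite Hs; case: (s).
      by case: (sg E i k) => //; rewrite negbK.
    split; first by rewrite /mk ffunE eqxx Hs; case: (s).
    by rewrite e1 e2; case: (s).
  + move=> [x [Hxj Harc]].
    case Hj: (j \in nbs E i).
    * case Hsg: (sg E i j).
      - move: Harc; case: (s) => [_|[a b]]; first exact: Hsg.
        have Hm := @G_mono V E i (lit E i x) (lit E i (setc x j true)).
        move: a b; rewrite /Fn !ffunE => a b.
        have : G E i (lit E i (setc x j true)); last by rewrite b.
        apply: Hm a => k _.
        rewrite /lit /setc ffunE; case: (k =P j) => [->|_]; last by [].
        by rewrite Hsg Hxj.
      - have Hf : (j, i, false) \in E.
          move: Hj; rewrite inE => /existsP [[] Hs] //; by rewrite /sg Hs in Hsg.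
        move: Harc; case: (s) => [[a b]|_]; last exact: Hf.
        have Hm := @G_mono V E i (lit E i (setc x j true)) (lit E i x).
        move: a b; rewrite /Fn !ffunE => a b.
        have : G E i (lit E i x); last by rewrite a.
        apply: Hm b => k _.
        rewrite /lit /setc ffunE; case: (k =P j) => [->|_]; last by [].
        by rewrite Hsg.
    * have e : Fn E (setc x j true) i = Fn E x i.
        rewrite /Fn !ffunE; apply: G_congr => k Hk.
        rewrite /lit /setc ffunE; case: (k =P j) => [Hkj|//].
        by rewrite Hkj Hj in Hk.
      by move: Harc; rewrite e; case: s => [[-> //]|[-> //]].
- move=> [w [c Hc]].
  move/card_gt0P: HV => [v _].
  have := upd_word_neg w c Hn; rewrite !Hc => /ffunP /(_ v); rewrite ffunE.
  by case: (c v).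
Qed.
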